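(* Let $Z$ be a separable metric space on which a group $G$ acts by isometries such that some $G$-orbit is dense in $Z$. If there exists a finite, nonzero, $G$-invariant Borel measure $\mu$ on $Z$, then $Z$ is totally bounded. *)

(* Defs.v *)
From Stdlib Require Import Reals List.
Open Scope R_scope.

Section Defs.
Context {X : Type} (d : X -> X -> R).

Definition is_metric : Prop :=
  (forall x y, 0 <= d x y) /\
  (forall x y, d x y = 0 <-> x = y) /\
  (forall x y, d x y = d y x) /\
  (forall x y z, d x z <= d x y + d y z).

Definition countable_set (D : X -> Prop) : Prop :=
  exists f : X -> nat, forall x y, D x -> D y -> f x = f y -> x = y.

Definition dense_set (D : X -> Prop) : Prop :=
  forall x eps, 0 < eps -> exists y, D y /\ d x y < eps.

Definition separable : Prop :=
  exists D : X -> Prop, countable_set D /\ dense_set D.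

Definition totally_bounded : Prop :=
  forall eps, 0 < eps -> exists l : list X, forall x, exists y, In y l /\ d x y < eps.

Definition open_set (U : X -> Prop) : Prop :=
  forall x, U x -> exists eps, 0 < eps /\ forall y, d x y < eps -> U y.

Definition sigma_algebra (S : (X -> Prop) -> Prop) : Prop :=
  S (fun _ => True) /\
  (forall A, S A -> S (fun x => ~ A x)) /\
  (forall A : nat -> X -> Prop, (forall n, S (A n)) -> S (fun x => exists n, A n x)).

Definition borel (A : X -> Prop) : Prop :=
  forall S, sigma_algebra S -> (forall U, open_set U -> S U) -> S A.

(** a finite (real-valued) Borel measure: nonnegative, mu(empty)=0,
    countably additive on Borel sets; values on non-Borel sets are irrelevant *)
Definition finite_borel_measure (mu : (X -> Prop) -> R) : Prop :=
  mu (fun _ => False) = 0 /\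
  (forall A, borel A -> 0 <= mu A) /\
  (forall A : nat -> X -> Prop,
      (forall n, borel (A n)) ->
      (forall n m x, n <> m -> A n x -> A m x -> False) ->
      infinite_sum (fun n => mu (A n)) (mu (fun x => exists n, A n x))).
End Defs.

Definition is_group {G : Type} (mul : G -> G -> G) (inv : G -> G) (e : G) : Prop :=
  (forall a b c, mul a (mul b c) = mul (mul a b) c) /\
  (forall a, mul e a = a /\ mul a e = a) /\
  (forall a, mul (inv a) a = e /\ mul a (inv a) = e).

Definition is_action {G X : Type} (mul : G -> G -> G) (e : G) (act : G -> X -> X) : Prop :=
  (forall x, act e x = x) /\ (forall g h x, act (mul g h) x = act g (act h x)).

Definition acts_by_isometries {G X : Type} (d : X -> X -> R) (act : G -> X -> X) : Prop :=
  forall g x y, d (act g x) (act g y) = d x y.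

Definition has_dense_orbit {G X : Type} (d : X -> X -> R) (act : G -> X -> X) : Prop :=
  exists x0, forall z eps, 0 < eps -> exists g, d z (act g x0) < eps.

Definition invariant_measure {G X : Type} (d : X -> X -> R) (act : G -> X -> X)
  (mu : (X -> Prop) -> R) : Prop :=
  forall g A, borel d A -> mu (fun x => A (act g x)) = mu A.

(* Main.v *)
Require Import Defs.
From Stdlib Require Import Reals List ZArith.
From Stdlib Require Import Lra Lia Classical ClassicalEpsilon FunctionalExtensionality PropExtensionality.
Open Scope R_scope.

Lemma pred_ext {X : Type} (P Q : X -> Prop) : (forall x, P x <-> Q x) -> P = Q.
Proof. intro H; apply functional_extensionality; intro x; apply propositional_extensionality; auto. Qed.

Lemma INR_unb (r : R) : exists n, r < INR n.
Proof.
  destruct (archimed r) as [H1 _].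
  destruct (Z_lt_le_dec (up r) 0) as [Hl|Hl].
  - exists 0%nat. apply IZR_lt in Hl. simpl. lra.
  - exists (Z.to_nat (up r)). rewrite INR_IZR_INZ, Z2Nat.id by lia. lra.
Qed.

Lemma sum_two (s : nat -> R) a b : s 0%nat = a -> s 1%nat = b ->
  (forall n, s (S (S n)) = 0) -> infinite_sum s (a + b).
Proof.
  intros H0 H1 H2 eps Heps. exists 1%nat. intros n Hn.
  assert (Hs : forall k, sum_f_R0 s (S k) = a + b).
  { induction k. simpl. lra. simpl in *. rewrite H2. lra. }
  destruct n. lia. rewrite Hs. unfold R_dist. rewrite Rminus_diag, Rabs_R0. lra.
Qed.

Lemma sum_zero (s : nat -> R) : (forall n, s n = 0) -> infinite_sum s 0.
Proof.
  intros H eps Heps. exists 0%nat. intros n _.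
  assert (Hs : sum_f_R0 s n = 0).
  { induction n. simpl. auto. simpl. rewrite IHn, H. lra. }
  rewrite Hs. unfold R_dist. rewrite Rminus_diag, Rabs_R0. lra.
Qed.

Lemma sum_const_div c L : 0 < c -> ~ infinite_sum (fun _ => c) L.
Proof.
  intros Hc H. destruct (H 1 Rlt_0_1) as [N HN].
  assert (Hs : forall n, sum_f_R0 (fun _ => c) n = INR (S n) * c).
  { induction n. simpl. lra. rewrite tech5, IHn, (S_INR (S n)). lra. }
  destruct (INR_unb ((L + 1) / c)) as [m Hm].
  specialize (HN (max N m) (Nat.le_max_l _ _)). rewrite Hs in HN.
  unfold R_dist in HN.
  assert (INR m <= INR (S (max N m))) by (apply le_INR; lia).
  assert (L + 1 < INR m * c).
  { apply (Rmult_lt_compat_r c) in Hm; auto. unfold Rdiv in Hm.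
    rewrite Rmult_assoc, Rinv_l, Rmult_1_r in Hm; lra. }
  assert (INR m * c <= INR (S (max N m)) * c) by (apply Rmult_le_compat_r; lra).
  apply Rabs_def2 in HN. lra.
Qed.

Section B.
Context {X : Type} (d : X -> X -> R).

Lemma borel_open U : Defs.open_set d U -> borel d U.
Proof. intros HU S HS Ho. auto. Qed.

Lemma borel_compl A : borel d A -> borel d (fun x => ~ A x).
Proof. intros HA S HS Ho. apply (proj1 (proj2 HS)). apply HA; auto. Qed.

Lemma borel_union (A : nat -> X -> Prop) : (forall n, borel d (A n)) ->
  borel d (fun x => exists n, A n x).
Proof. intros HA S HS Ho. apply (proj2 (proj2 HS)). intro n. apply HA; auto. Qed.

Lemma borel_True : borel d (fun _ => True).
Proof. intros S HS Ho. apply HS. Qed.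

Lemma borel_False : borel d (fun _ => False).
Proof. apply borel_open. intros x []. Qed.

Lemma borel_inter A B : borel d A -> borel d B -> borel d (fun x => A x /\ B x).
Proof.
  intros HA HB.
  assert (E : (fun x => A x /\ B x) = (fun x => ~ exists n,
     (fun n => match n with 0%nat => fun x => ~ A x | _ => fun x => ~ B x end) n x)).
  { apply pred_ext; intro x; split.
    - intros [Ha Hb] [[|n] Hn]; auto.
    - intro H; split; apply NNPP; intro H'; apply H; [exists 0%nat | exists 1%nat]; auto. }
  rewrite E. apply borel_compl, borel_union. intros [|n]; apply borel_compl; auto.
Qed.

Lemma mono mu P Q : finite_borel_measure d mu -> borel d P -> borel d Q ->
  (forall x, P x -> Q x) -> mu P <= mu Q.
Proof.
  intros [H0 [Hpos Hadd]] HP HQ Hsub.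
  set (C := fun n : nat => match n with 0%nat => P | 1%nat => fun x => Q x /\ ~ P x
                               | _ => fun _ => False end).
  assert (HC : forall n, borel d (C n)).
  { intros [|[|n]]; unfold C; simpl; auto using borel_inter, borel_compl, borel_False. }
  assert (Hd : forall n m x, n <> m -> C n x -> C m x -> False).
  { intros [|[|n]] [|[|m]] x Hnm; unfold C; simpl; intros; try tauto; congruence. }
  pose proof (Hadd C HC Hd) as H1.
  assert (E : (fun x => exists n, C n x) = Q).
  { apply pred_ext; intro x; split.
    - intros [[|[|n]] Hn]; unfold C in Hn; simpl in Hn; [apply Hsub; auto | tauto | tauto].
    - intro Hq. destruct (classic (P x)). exists 0%nat; auto. exists 1%nat; unfold C; simpl; auto. }
  rewrite E in H1.
  pose proof (sum_two (fun n => mu (C n)) (mu P) (mu (fun x => Q x /\ ~ P x))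
     eq_refl eq_refl (fun n => H0)) as H2.
  rewrite (uniqueness_sum _ _ _ H1 H2).
  pose proof (Hpos _ (HC 1%nat)). simpl in H. lra.
Qed.

Lemma null_union mu (A : nat -> X -> Prop) : finite_borel_measure d mu ->
  (forall n, borel d (A n)) -> (forall n, mu (A n) = 0) ->
  mu (fun x => exists n, A n x) = 0.
Proof.
  intros Hmu HA H0.
  set (B := fun n x => A n x /\ forall k, (k < n)%nat -> ~ A k x).
  assert (HF : forall n, borel d (fun x => forall k, (k < n)%nat -> ~ A k x)).
  { induction n.
    - replace (fun x => forall k, (k < 0)%nat -> ~ A k x) with (fun _ : X => True).
      apply borel_True. apply pred_ext; intro x; split; auto; intros; lia.
    - replace (fun x => forall k, (k < S n)%nat -> ~ A k x) with
        (fun x => (forall k, (k < n)%nat -> ~ A k x) /\ ~ A n x).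
      apply borel_inter; auto. apply borel_compl; auto.
      apply pred_ext; intro x; split.
      + intros [H1 H2] k Hk. destruct (Nat.eq_dec k n). subst; auto. apply H1; lia.
      + intro H1; split; intros; apply H1; lia. }
  assert (HB : forall n, borel d (B n)) by (intro n; apply borel_inter; auto).
  assert (Hd : forall n m x, n <> m -> B n x -> B m x -> False).
  { intros n m x Hnm [Hn Hn'] [Hm Hm']. destruct (proj1 (Nat.lt_gt_cases n m) Hnm).
    apply (Hm' n); auto. apply (Hn' m); auto. }
  pose proof (proj2 (proj2 Hmu) B HB Hd) as H1.
  assert (E : (fun x => exists n, B n x) = (fun x => exists n, A n x)).
  { apply pred_ext; intro x; split.
    - intros [n [Hn _]]; eauto.
    - intros [n Hn]. revert Hn. induction n as [n IH] using (well_founded_induction lt_wf).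
      intro Hn. destruct (classic (exists k, (k < n)%nat /\ A k x)) as [[k [Hk1 Hk2]]|Hno].
      + apply (IH k); auto.
      + exists n. split; auto. intros k Hk Hak. apply Hno; eauto. }
  rewrite E in H1.
  assert (Hz : forall n, mu (B n) = 0).
  { intro n. pose proof (mono mu (B n) (A n) Hmu (HB n) (HA n) (fun x H => proj1 H)).
    pose proof (proj1 (proj2 Hmu) _ (HB n)). rewrite H0 in H. lra. }
  exact (uniqueness_sum _ _ _ H1 (sum_zero _ Hz)).
Qed.

Lemma ball_open (Hm : is_metric d) y r : Defs.open_set d (fun z => d y z < r).
Proof.
  intros x Hx. exists (r - d y x). split. lra.
  intros z Hz. destruct Hm as [_ [_ [_ Ht]]]. pose proof (Ht y x z). lra.
Qed.
End B.

Theorem mainTheorem6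
  (X : Type) (d : X -> X -> R) (Hmetric : is_metric d) (Hsep : separable d)
  (G : Type) (mul : G -> G -> G) (inv : G -> G) (e : G)
  (Hgroup : is_group mul inv e)
  (act : G -> X -> X) (Hact : is_action mul e act)
  (Hiso : acts_by_isometries d act)
  (Hdense : has_dense_orbit d act)
  (mu : (X -> Prop) -> R)
  (Hmu : finite_borel_measure d mu)
  (Hnz : mu (fun _ => True) <> 0)
  (Hinv : invariant_measure d act mu) :
  totally_bounded d.
Proof.
  destruct Hdense as [x0 Hd].
  pose proof Hmetric as [Hnn [Hzero [Hsym Htri]]].
  assert (Hball : forall g r, mu (fun z => d (act g x0) z < r) = mu (fun z => d x0 z < r)).
  { intros g r. rewrite <- (Hinv (inv g) (fun z => d x0 z < r)).
    2: apply borel_open, ball_open; auto.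
    f_equal. apply pred_ext; intro z.
    rewrite <- (Hiso g x0 (act (inv g) z)).
    rewrite <- (proj2 Hact), (proj2 (proj2 (proj2 Hgroup) g)), (proj1 Hact). tauto. }
  assert (Hposb : forall r, 0 < r -> 0 < mu (fun z => d x0 z < r)).
  { intros r Hr.
    pose proof (proj1 (proj2 Hmu) _ (borel_open d _ (ball_open d Hmetric x0 r))).
    destruct (Rle_lt_or_eq_dec _ _ H) as [|Hc]; auto. exfalso.
    assert (Hr2 : 0 < r / 2) by lra.
    set (gf := fun z => proj1_sig (constructive_indefinite_description _ (Hd z (r/2) Hr2))).
    assert (Hgf : forall z, d z (act (gf z) x0) < r / 2).
    { intro z. unfold gf. destruct constructive_indefinite_description; auto. }
    destruct Hsep as [D [[f Hf] HD]].
    set (A := fun n x => exists y, D y /\ f y = n /\ d (act (gf y) x0) x < r).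
    assert (HA : forall n, borel d (A n)).
    { intro n. apply borel_open. intros x [y [Hy1 [Hy2 Hy3]]].
      destruct (ball_open d Hmetric _ _ x Hy3) as [eps [He He']].
      exists eps; split; auto. intros z Hz. exists y; auto. }
    assert (H0 : forall n, mu (A n) = 0).
    { intro n. destruct (classic (exists y, D y /\ f y = n)) as [[y [Hy1 Hy2]]|Hno].
      - replace (A n) with (fun x => d (act (gf y) x0) x < r).
        rewrite Hball; auto.
        apply pred_ext; intro x; split.
        + intro; exists y; auto.
        + intros [y' [H1 [H2 H3]]]. assert (y' = y) by (apply Hf; auto; lia). subst; auto.
      - replace (A n) with (fun _ : X => False). apply Hmu.
        apply pred_ext; intro x; split; [tauto|]. intros [y [H1 [H2 _]]]. apply Hno; eauto. }
    pose proof (null_union d mu A Hmu HA H0).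
    replace (fun x => exists n, A n x) with (fun _ : X => True) in H1; auto.
    apply pred_ext; intro x; split; auto. intros _.
    destruct (HD x (r/2) Hr2) as [y [Hy Hxy]]. exists (f y), y. split; auto. split; auto.
    pose proof (Htri (act (gf y) x0) y x). pose proof (Hgf y). rewrite Hsym in H3. rewrite (Hsym y x) in H2. lra.
    }
  apply NNPP. intro Hntb.
  assert (Hex : exists eps, 0 < eps /\ forall l : list X, exists x, forall y, In y l -> eps <= d x y).
  { apply NNPP. intro H. apply Hntb. intros eps He. apply NNPP. intro Hl.
    apply H. exists eps; split; auto. intro l. apply NNPP. intro Hx.
    apply Hl. exists l. intro x. apply NNPP. intro Hy. apply Hx. exists x.
    intros y Hin. apply Rnot_lt_le. intro Hlt. apply Hy. eauto. }
  destruct Hex as [eps [Heps Hfar]].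
  assert (Hfar2 : forall l : list X, exists g, forall y, In y l -> eps / 2 <= d (act g x0) y).
  { intro l. destruct (Hfar l) as [x Hx]. destruct (Hd x (eps/2)) as [g Hg]. lra.
    exists g. intros y Hy. pose proof (Hx y Hy). pose proof (Htri x (act g x0) y). lra. }
  set (F := fun l => proj1_sig (constructive_indefinite_description _ (Hfar2 l))).
  assert (HF : forall l y, In y l -> eps / 2 <= d (act (F l) x0) y).
  { intro l. unfold F. destruct constructive_indefinite_description; auto. }
  set (L := fix L n := match n with 0%nat => nil | S n => act (F (L n)) x0 :: L n end).
  set (yv := fun n => act (F (L n)) x0).
  assert (HIn : forall m n, (m < n)%nat -> In (yv m) (L n)).
  { intros m n; induction n; intro Hmn. lia. simpl.
    destruct (Nat.eq_dec m n). subst; left; auto. right; apply IHn; lia. }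
  assert (Hsepd : forall n m, n <> m -> eps / 2 <= d (yv n) (yv m)).
  { intros n m Hnm. destruct (proj1 (Nat.lt_gt_cases n m) Hnm).
    - rewrite Hsym. apply HF, HIn; auto.
    - apply HF, HIn; auto. }
  set (Bl := fun n z => d (yv n) z < eps / 4).
  assert (HBl : forall n, borel d (Bl n)) by (intro; apply borel_open, ball_open; auto).
  assert (Hdj : forall n m x, n <> m -> Bl n x -> Bl m x -> False).
  { intros n m x Hnm H1 H2. unfold Bl in *. pose proof (Hsepd n m Hnm).
    pose proof (Htri (yv n) x (yv m)) as H4. rewrite (Hsym x) in H4. lra. }
  pose proof (proj2 (proj2 Hmu) Bl HBl Hdj) as Hs.
  assert (Hc : forall n, mu (Bl n) = mu (fun z => d x0 z < eps / 4)).
  { intro n. apply Hball. }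
  apply (sum_const_div (mu (fun z => d x0 z < eps / 4)) (mu (fun x => exists n, Bl n x))).
  apply Hposb; lra.
  intros ep Hep. destruct (Hs ep Hep) as [N HN]. exists N. intros n Hn.
  specialize (HN n Hn). replace (sum_f_R0 (fun _ => mu (fun z => d x0 z < eps / 4)) n)
    with (sum_f_R0 (fun n => mu (Bl n)) n); auto.
  apply sum_eq. intros; apply Hc.
Qed.
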